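(* Let $\mathcal{C}$ be a finite length abelian category and $\mathcal{A}$ the abelian category whose objects are complexes $[A\xrightarrow{}B\xrightarrow{}C]$ in $\mathcal{C}$ (degrees $-2,-1,0$) with first map injective and exact at $B$, morphisms being chain maps modulo homotopy. Let $X=[A\to B\xrightarrow{d}C]$ be an object of $\mathcal{A}$ with $C$ indecomposable in $\mathcal{C}$. Then $X$ is a simple object of $\mathcal{A}$ if and only if $d$ is an almost split right map. Moreover, if $d$ is almost split, then $X$ (denoted $L_C$) is the unique simple quotient of $P_C=[0\to0\to C]$ in $\mathcal{A}$.
   Context: A morphism $d:B\to C$ in $\mathcal{C}$ is an almost split right map if $d$ is not a split surjection and every morphism $\phi:Y\to C$ that is not a split surjection factors through $d$. $\mathcal{A}$ is the heart of the $t$-structure on $K^b(\mathcal{C})$ with $D^{\leq 0}=\{X: X^i=0,\ i>0\}$ and $D^{\geq 0}=\{X: X^i=0,\ i<-2,\ H^{-2}(X)=H^{-1}(X)=0\}$. *)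

(* Defs.v *)
From HB Require Import structures.
From mathcomp Require Import all_boot all_order all_algebra.
Set Implicit Arguments. Unset Strict Implicit. Unset Printing Implicit Defensive.
Import GRing.Theory.
Local Open Scope ring_scope.

Record precat := PreCat {
  Obj :> Type;
  Hom : Obj -> Obj -> zmodType;
  idm : forall X, Hom X X;
  comp : forall X Y Z, Hom Y Z -> Hom X Y -> Hom X Z;
  compA : forall X Y Z W (h : Hom Z W) (g : Hom Y Z) (f : Hom X Y),
      comp h (comp g f) = comp (comp h g) f;
  comp1m : forall X Y (f : Hom X Y), comp (idm Y) f = f;
  compm1 : forall X Y (f : Hom X Y), comp f (idm X) = f;
  compDl : forall X Y Z (g1 g2 : Hom Y Z) (f : Hom X Y),
      comp (g1 + g2) f = comp g1 f + comp g2 f;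
  compDr : forall X Y Z (g : Hom Y Z) (f1 f2 : Hom X Y),
      comp g (f1 + f2) = comp g f1 + comp g f2;
  (* a chosen zero object (exists in any abelian category) *)
  zobj : Obj;
  zobjP : idm zobj = 0
}.
Arguments idm {p}.
Arguments comp {p X Y Z}.
Arguments zobj {p}.
Notation "g \oc f" := (comp g f) (at level 40, left associativity).

Section Cat.
Variable C : precat.
Implicit Types X Y Z : C.

Definition is_zero X := idm X = 0 :> Hom X X.
Definition mono X Y (f : Hom X Y) :=
  forall Z (g : Hom Z X), f \oc g = 0 -> g = 0.
Definition epi X Y (f : Hom X Y) :=
  forall Z (g : Hom Y Z), g \oc f = 0 -> g = 0.
Definition iso X Y (f : Hom X Y) :=
  exists g : Hom Y X, g \oc f = idm X /\ f \oc g = idm Y.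
Definition is_kernel X Y K (f : Hom X Y) (k : Hom K X) :=
  f \oc k = 0 /\
  forall Z (g : Hom Z X), f \oc g = 0 -> exists! h : Hom Z K, k \oc h = g.
Definition is_cokernel X Y Q (f : Hom X Y) (c : Hom Y Q) :=
  c \oc f = 0 /\
  forall Z (g : Hom Y Z), g \oc f = 0 -> exists! h : Hom Q Z, h \oc c = g.
Definition is_biproduct X1 X2 P (i1 : Hom X1 P) (i2 : Hom X2 P)
    (p1 : Hom P X1) (p2 : Hom P X2) :=
  [/\ p1 \oc i1 = idm X1, p2 \oc i2 = idm X2, p1 \oc i2 = 0, p2 \oc i1 = 0
    & i1 \oc p1 + i2 \oc p2 = idm P].

Definition abelian : Prop :=
  [/\ (forall X1 X2, exists P (i1 : Hom X1 P) (i2 : Hom X2 P) p1 p2,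
          is_biproduct i1 i2 p1 p2),
      (forall X Y (f : Hom X Y), exists K (k : Hom K X), is_kernel f k),
      (forall X Y (f : Hom X Y), exists Q (c : Hom Y Q), is_cokernel f c),
      (forall X Y (f : Hom X Y), mono f ->
          exists Q (g : Hom Y Q), is_kernel g f)
    & (forall X Y (f : Hom X Y), epi f ->
          exists K (g : Hom K X), is_cokernel g f)].

Definition simple X :=
  ~ is_zero X /\ forall Y (m : Hom Y X), mono m -> is_zero Y \/ iso m.
Definition indecomposable X :=
  ~ is_zero X /\
  forall X1 X2 (i1 : Hom X1 X) (i2 : Hom X2 X) p1 p2,
    is_biproduct i1 i2 p1 p2 -> is_zero X1 \/ is_zero X2.

Definition has_finite_length X :=
  exists (n : nat) (obj : nat -> C) (m : forall i, Hom (obj i) (obj i.+1))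
         (e : Hom (obj n) X),
    [/\ iso e, is_zero (obj 0%N) &
        forall i, (i < n)%N ->
          mono (m i) /\
          exists Q (c : Hom (obj i.+1) Q), is_cokernel (m i) c /\ simple Q].
Definition finite_length := forall X, has_finite_length X.

Definition split_epi X Y (f : Hom X Y) := exists s : Hom Y X, f \oc s = idm Y.
Definition almost_split_right B Y (d : Hom B Y) :=
  ~ split_epi d /\
  forall Z (phi : Hom Z Y), ~ split_epi phi -> exists g : Hom Z B, d \oc g = phi.

End Cat.

Section CatA.
Variable C : precat.

(* a complex [c2 --cf--> c1 --cd--> c0] in degrees -2,-1,0 *)
Record cx := Cx { c2 : C; c1 : C; c0 : C; cf : Hom c2 c1; cd : Hom c1 c0 }.

Definition inA (X : cx) :=
  [/\ cd X \oc cf X = 0, mono (cf X) &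
      forall Z (g : Hom Z (c1 X)), cd X \oc g = 0 ->
        exists h : Hom Z (c2 X), cf X \oc h = g].

Implicit Types X Y Z : cx.
Record tri (X Y : cx) := Tri {
  ma : Hom (c2 X) (c2 Y); mb : Hom (c1 X) (c1 Y); mc : Hom (c0 X) (c0 Y) }.

Definition is_cmap X Y (u : tri X Y) :=
  cf Y \oc ma u = mb u \oc cf X /\ cd Y \oc mb u = mc u \oc cd X.

Definition tcomp X Y Z (v : tri Y Z) (u : tri X Y) : tri X Z :=
  Tri (ma v \oc ma u) (mb v \oc mb u) (mc v \oc mc u).
Definition tid X : tri X X := Tri (idm _) (idm _) (idm _).

Definition htp X Y (u v : tri X Y) :=
  exists (h1 : Hom (c1 X) (c2 Y)) (h0 : Hom (c0 X) (c1 Y)),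
    [/\ ma u - ma v = h1 \oc cf X,
        mb u - mb v = cf Y \oc h1 + h0 \oc cd X &
        mc u - mc v = cd Y \oc h0].
Definition tzero X Y : tri X Y := Tri 0 0 0.

Definition zeroA X := htp (tid X) (tzero X X).
Definition monoA X Y (u : tri X Y) :=
  forall Z, inA Z -> forall v : tri Z X, is_cmap v ->
    htp (tcomp u v) (tzero Z Y) -> htp v (tzero Z X).
Definition epiA X Y (u : tri X Y) :=
  forall Z, inA Z -> forall v : tri Y Z, is_cmap v ->
    htp (tcomp v u) (tzero X Z) -> htp v (tzero Y Z).
Definition isoA X Y (u : tri X Y) :=
  exists v : tri Y X, is_cmap v /\
    htp (tcomp v u) (tid X) /\ htp (tcomp u v) (tid Y).
Definition simpleA X :=
  ~ zeroA X /\
  forall Y, inA Y -> forall u : tri Y X, is_cmap u -> monoA u ->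
    zeroA Y \/ isoA u.

Definition PC (Y : C) : cx := Cx (0 : Hom (@zobj C) zobj) (0 : Hom zobj Y).

End CatA.

(* Main.v *)
Require Import Defs.
From mathcomp Require Import all_boot all_order all_algebra.
Require Import Defs.
From Stdlib Require Import ClassicalEpsilon Classical.
From mathcomp Require Import zify.
Set Implicit Arguments. Unset Strict Implicit. Unset Printing Implicit Defensive.
Import GRing.Theory.
Local Open Scope ring_scope.

Section Basics.
Variable C : precat.
Implicit Types X Y Z W : C.

Lemma comp0l X Y Z (f : Hom X Y) : (0 : Hom Y Z) \oc f = 0.
Proof.
have h := compDl (0:Hom Y Z) 0 f; rewrite addr0 in h.
by apply: (addrI (0 \oc f)); rewrite -h addr0.
Qed.
Lemma comp0r X Y Z (g : Hom Y Z) : g \oc (0 : Hom X Y) = 0.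
Proof.
have h := compDr g (0:Hom X Y) 0; rewrite addr0 in h.
by apply: (addrI (g \oc 0)); rewrite -h addr0.
Qed.
Lemma compNl X Y Z (g : Hom Y Z) (f : Hom X Y) : (- g) \oc f = - (g \oc f).
Proof. by apply/eqP; rewrite -subr_eq0 opprK -compDl addNr comp0l. Qed.
Lemma compNr X Y Z (g : Hom Y Z) (f : Hom X Y) : g \oc (- f) = - (g \oc f).
Proof. by apply/eqP; rewrite -subr_eq0 opprK -compDr addNr comp0r. Qed.
Lemma compBl X Y Z (g1 g2 : Hom Y Z) (f : Hom X Y) :
  (g1 - g2) \oc f = g1 \oc f - g2 \oc f.
Proof. by rewrite compDl compNl. Qed.
Lemma compBr X Y Z (g : Hom Y Z) (f1 f2 : Hom X Y) :
  g \oc (f1 - f2) = g \oc f1 - g \oc f2.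
Proof. by rewrite compDr compNr. Qed.

Definition compE := (comp0l, comp0r, compNl, compNr, compDl, compDr, comp1m, compm1).

Lemma mono_inj X Y (f : Hom X Y) Z (g1 g2 : Hom Z X) :
  mono f -> f \oc g1 = f \oc g2 -> g1 = g2.
Proof.
move=> mf e; apply/eqP; rewrite -subr_eq0; apply/eqP; apply: mf.
by rewrite compBr e subrr.
Qed.
Lemma epi_inj X Y (f : Hom X Y) Z (g1 g2 : Hom Y Z) :
  epi f -> g1 \oc f = g2 \oc f -> g1 = g2.
Proof.
move=> mf e; apply/eqP; rewrite -subr_eq0; apply/eqP; apply: mf.
by rewrite compBl e subrr.
Qed.
Lemma monoP X Y (f : Hom X Y) :
  (forall Z (g1 g2 : Hom Z X), f \oc g1 = f \oc g2 -> g1 = g2) -> mono f.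
Proof. by move=> h Z g e; apply: h; rewrite e comp0r. Qed.
Lemma epiP X Y (f : Hom X Y) :
  (forall Z (g1 g2 : Hom Y Z), g1 \oc f = g2 \oc f -> g1 = g2) -> epi f.
Proof. by move=> h Z g e; apply: h; rewrite e comp0l. Qed.

Lemma mono_comp X Y Z (g : Hom Y Z) (f : Hom X Y) : mono g -> mono f -> mono (g \oc f).
Proof. by move=> mg mf W h; rewrite -compA => /mg /mf. Qed.
Lemma epi_comp X Y Z (g : Hom Y Z) (f : Hom X Y) : epi g -> epi f -> epi (g \oc f).
Proof. by move=> mg mf W h; rewrite compA => /mf /mg. Qed.
Lemma mono_compr X Y Z (g : Hom Y Z) (f : Hom X Y) : mono (g \oc f) -> mono f.
Proof. by move=> m W h e; apply: m; rewrite -compA e comp0r. Qed.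
Lemma epi_compl X Y Z (g : Hom Y Z) (f : Hom X Y) : epi (g \oc f) -> epi g.
Proof. by move=> m W h e; apply: m; rewrite compA e comp0l. Qed.

Lemma iso_mono X Y (f : Hom X Y) : iso f -> mono f.
Proof.
case=> g [gf _]; apply: monoP => Z g1 g2 e.
by rewrite -(comp1m g1) -(comp1m g2) -gf -!compA e.
Qed.
Lemma iso_epi X Y (f : Hom X Y) : iso f -> epi f.
Proof.
case=> g [_ fg]; apply: epiP => Z g1 g2 e.
by rewrite -(compm1 g1) -(compm1 g2) -fg !compA e.
Qed.
Lemma iso_id X : iso (idm X).
Proof. by exists (idm X); rewrite comp1m. Qed.
Lemma iso_comp X Y Z (g : Hom Y Z) (f : Hom X Y) : iso g -> iso f -> iso (g \oc f).
Proof.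
case=> g' [g1 g2] [f' [f1 f2]]; exists (f' \oc g'); split.
  by rewrite -compA (compA g') g1 comp1m f1.
by rewrite -compA (compA f) f2 comp1m g2.
Qed.
Lemma iso_sym X Y (f : Hom X Y) (g : Hom Y X) :
  g \oc f = idm X -> f \oc g = idm Y -> iso g.
Proof. by move=> a b; exists f. Qed.

Lemma zero_from X Y (f : Hom X Y) : is_zero X -> f = 0.
Proof. by move=> z; rewrite -(compm1 f) z comp0r. Qed.
Lemma zero_to X Y (f : Hom Y X) : is_zero X -> f = 0.
Proof. by move=> z; rewrite -(comp1m f) z comp0l. Qed.
Lemma zobj_zero : is_zero (@zobj C).
Proof. exact: zobjP. Qed.

Lemma ker_mono X Y K (f : Hom X Y) (k : Hom K X) : is_kernel f k -> mono k.
Proof.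
case=> fk0 u Z g e.
case: (u Z (k \oc g)); first by rewrite compA fk0 comp0l.
move=> h [_ hu].
by rewrite -(hu g erefl) (hu 0) // comp0r e.
Qed.
Lemma coker_epi X Y Q (f : Hom X Y) (c : Hom Y Q) : is_cokernel f c -> epi c.
Proof.
case=> cf0 u Z g e.
case: (u Z (g \oc c)); first by rewrite -compA cf0 comp0r.
move=> h [_ hu].
by rewrite -(hu g erefl) (hu 0) // comp0l e.
Qed.
Lemma ker_fact X Y K (f : Hom X Y) (k : Hom K X) Z (g : Hom Z X) :
  is_kernel f k -> f \oc g = 0 -> exists h, k \oc h = g.
Proof. by case=> _ u /u [h [e _]]; exists h. Qed.
Lemma coker_fact X Y Q (f : Hom X Y) (c : Hom Y Q) Z (g : Hom Y Z) :
  is_cokernel f c -> g \oc f = 0 -> exists h, h \oc c = g.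
Proof. by case=> _ u /u [h [e _]]; exists h. Qed.

Lemma zero_iso X Y (f : Hom X Y) : iso f -> is_zero X -> is_zero Y.
Proof.
case=> g [gf fg] z; rewrite /is_zero -fg (zero_to g z) comp0r //.
Qed.
Lemma zero_iso' X Y (f : Hom X Y) : iso f -> is_zero Y -> is_zero X.
Proof.
case=> g [gf fg] z; rewrite /is_zero -gf (zero_from g z) comp0l //.
Qed.

End Basics.

Section Ab.
Variable C : precat.
Hypothesis HA : abelian C.
Implicit Types X Y Z W : C.

Lemma kerE X Y (f : Hom X Y) : exists K (k : Hom K X), is_kernel f k.
Proof. by case: HA => _ h _ _ _; apply: h. Qed.
Lemma cokerE X Y (f : Hom X Y) : exists Q (c : Hom Y Q), is_cokernel f c.
Proof. by case: HA => _ _ h _ _; apply: h. Qed.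
Lemma biprodE X1 X2 : exists P (i1 : Hom X1 P) (i2 : Hom X2 P) p1 p2,
          is_biproduct i1 i2 p1 p2.
Proof. by case: HA => h _ _ _ _; apply: h. Qed.

Lemma mono_ker_coker X Y Q (m : Hom X Y) (c : Hom Y Q) :
  mono m -> is_cokernel m c -> is_kernel c m.
Proof.
move=> mm cc; case: HA => _ _ _ hm _.
have [Q' [g [gm u]]] := hm _ _ _ mm.
split; first by case: cc.
move=> Z h ch.
have [g' e] := coker_fact cc gm.
case: (u Z h); first by rewrite -e -compA ch comp0r.
move=> x [xe _].
exists x; split => // x' e'; apply: (mono_inj mm); by rewrite xe e'.
Qed.

Lemma epi_ker_coker X Y K (p : Hom X Y) (k : Hom K X) :
  epi p -> is_kernel p k -> is_cokernel k p.
Proof.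
move=> mp kk; case: HA => _ _ _ _ he.
have [K' [g [pg u]]] := he _ _ _ mp.
split; first by case: kk.
move=> Z h hk.
have [g' e] := ker_fact kk pg.
case: (u Z h); first by rewrite -e compA hk comp0l.
move=> x [xe _].
exists x; split => // x' e'; apply: (epi_inj mp); by rewrite xe e'.
Qed.

Lemma mono_epi_iso X Y (f : Hom X Y) : mono f -> epi f -> iso f.
Proof.
move=> mf ef; case: HA => _ _ _ hm _.
have [Q [g [gf u]]] := hm _ _ _ mf.
have g0 : g = 0 by apply: ef.
case: (u Y (idm Y)); first by rewrite g0 comp0l.
move=> h [fh _].
exists h; split => //.
by apply: (mono_inj mf); rewrite compA fh comp1m compm1.
Qed.

Lemma image_fact X Y (f : Hom X Y) :
  exists I (i : Hom I Y) (q : Hom X I), [/\ mono i, epi q & f = i \oc q].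
Proof.
have [Q [c cc]] := cokerE f.
have [I [i ki]] := kerE c.
have [q fq] := ker_fact ki (proj1 cc).
exists I, i, q; split => //; first exact: ker_mono ki.
move=> Z g gq.
have [M [m km]] := kerE g.
have [q' qq] := ker_fact km gq.
have mim : mono (i \oc m) by apply: mono_comp; [exact: ker_mono ki | exact: ker_mono km].
case: HA => _ _ _ hm _.
have [H [h [him u]]] := hm _ _ _ mim.
have hf : h \oc f = 0 by rewrite -fq -qq (compA i) compA him comp0l.
have [h' hh] := coker_fact cc hf.
have hi : h \oc i = 0 by rewrite -hh -compA (proj1 ki) comp0r.
have [s [se _]] := u I i hi.
have ms : m \oc s = idm I.
  by apply: (mono_inj (ker_mono ki)); rewrite compA se compm1.
by rewrite -(compm1 g) -ms compA (proj1 km) comp0l.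
Qed.

Lemma pullbackE X Y Z (a : Hom X Z) (b : Hom Y Z) :
  exists P (pa : Hom P X) (pb : Hom P Y),
    [/\ a \oc pa = b \oc pb,
        (forall W (x : Hom W X) (y : Hom W Y), a \oc x = b \oc y ->
            exists h, pa \oc h = x /\ pb \oc h = y) &
        (epi a -> epi pb)].
Proof.
have [S [i1 [i2 [p1 [p2 [e11 e22 e12 e21 eid]]]]]] := biprodE X Y.
set s := a \oc p1 - b \oc p2.
have [P [k kk]] := kerE s.
exists P, (p1 \oc k), (p2 \oc k); split.
- apply/eqP; rewrite -subr_eq0 !compA -compBl; apply/eqP; exact: (proj1 kk).
- move=> W x y e.
  have [h he] : exists h, k \oc h = i1 \oc x + i2 \oc y.
    apply: (ker_fact kk).
    rewrite /s !compE !compA -!(compA _ p1) -!(compA _ p2) e11 e12 e21 e22.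
    by rewrite !compE addr0 add0r e subrr.
  exists h; rewrite -!compA he !compE !compA e11 e12 e21 e22 !compE.
  by rewrite addr0 add0r.
- move=> ea.
  have es : epi s.
    move=> T t ts; apply: ea; move: (congr1 (fun z => z \oc i1) ts).
    by rewrite /s compBr !compBl -!compA e11 e21 !compE subr0.
  have ck := epi_ker_coker es kk.
  move=> T t tp.
  have [t' te] : exists t', t' \oc s = t \oc p2.
    by apply: (coker_fact ck); rewrite -compA tp.
  have t'a : t' = 0.
    apply: ea; have : t' \oc s \oc i1 = 0 by rewrite te -compA e21 comp0r.
    by rewrite /s compBr compBl -!compA e11 e21 !compE subr0.
  have : t' \oc s \oc i2 = t by rewrite te -compA e22 compm1.
  by rewrite t'a !comp0l.
Qed.

End Ab.

Section Len.
Variable C : precat.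
Hypothesis HA : abelian C.
Implicit Types X Y Z W : C.

Fixpoint mylen X (n : nat) {struct n} : Prop :=
  match n with
  | 0%N => is_zero X
  | n'.+1 => exists Y (m : Hom Y X), [/\ mono m, mylen Y n' &
        exists Q (c : Hom X Q), is_cokernel m c /\ (simple Q \/ is_zero Q)]
  end.

Lemma mylen_iso n : forall X Y (m : Hom Y X), iso m -> mylen X n -> mylen Y n.
Proof.
elim: n => [|n IH] X Y m im /=.
  exact: zero_iso' im.
case=> Y' [m' [mm' l' [Q [c [cc sQ]]]]].
case: (im) => g [gm mg].
exists Y', (g \oc m'); split => //.
  apply: mono_comp => //; apply: iso_mono; exists m; split => //.
exists Q, (c \oc m); split => //; split.
  by rewrite -compA (compA m) mg comp1m (proj1 cc).
move=> Z h hgm.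
case: ((proj2 cc) Z (h \oc g)); first by rewrite -compA hgm.
move=> h' [h'e h'u].
exists h'; split.
  by rewrite compA h'e -compA gm compm1.
move=> h'' e; apply: h'u; rewrite -e -!compA mg compm1 //.
Qed.

Lemma zobj_coker X : is_cokernel (idm X) (0 : Hom X (@zobj C)).
Proof.
split; first by rewrite comp0l.
move=> Z h; rewrite compm1 => ->; exists 0; split; first by rewrite comp0l.
by move=> h' _; rewrite (zero_from h' (@zobj_zero C)).
Qed.

Lemma mylenS X n : mylen X n -> mylen X n.+1.
Proof.
move=> l; exists X, (idm X); split => //; first exact: iso_mono (iso_id X).
exists zobj, 0; split; [exact: zobj_coker | right; exact: zobj_zero].
Qed.
Lemma mylen_pred X n : mylen X n.-1 -> mylen X n.
Proof. by case: n => //= n; apply: mylenS. Qed.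

Lemma zero_mono_iso X Y (m : Hom Y X) : is_zero X -> mono m -> iso m.
Proof.
move=> zX mm.
have zY : is_zero Y by apply: mm; apply: zero_to.
exists 0; split; first by rewrite comp0l zY.
by rewrite comp0r zX.
Qed.

Lemma claim n : forall X, mylen X n -> forall Y (m : Hom Y X), mono m ->
  iso m \/ ((0 < n)%N /\ mylen Y n.-1).
Proof.
elim: n => [|n IH] X /=; first by move=> zX Y m mm; left; exact: zero_mono_iso.
case=> Y0 [m0 [mm0 l0 [Q [c [cc sQ]]]]] Y m mm.
have kc := mono_ker_coker HA mm0 cc.
case: sQ => [sQ|zQ].
- have [I [i [q [mi eq cme]]]] := image_fact HA (c \oc m).
  case: (proj2 sQ I i mi) => [zI|ii].
  + have cm0 : c \oc m = 0 by rewrite cme (zero_to q zI) comp0r.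
    have [z mz] := ker_fact kc cm0.
    have mz' : mono z by apply: (mono_compr (g:=m0)); rewrite mz.
    right; split => //.
    case: (IH _ l0 _ _ mz') => [iz|[_ lY]]; last exact: mylen_pred.
    have [zi [zz1 zz2]] := iz.
    exact: (mylen_iso (m:=z)).
  + have ecm : epi (c \oc m) by rewrite cme; apply: epi_comp => //; exact: iso_epi.
    have [Y' [y ky]] := kerE HA (c \oc m).
    have my : mono y := ker_mono ky.
    have [z mz] : exists z, m0 \oc z = m \oc y.
      by apply: (ker_fact kc); rewrite compA (proj1 ky).
    have mz' : mono z.
      by apply: (mono_compr (g:=m0)); rewrite mz; apply: mono_comp.
    case: (IH _ l0 _ _ mz') => [iz|[n0 lY']].
    * left; apply: (mono_epi_iso HA mm) => T g gm.
      have [zi [zz1 zz2]] := iz.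
      have gm0 : g \oc m0 = 0.
        by rewrite -(compm1 m0) -zz2 (compA m0) mz !compA gm !comp0l.
      have [g' gc] := coker_fact cc gm0.
      have g'0 : g' = 0 by apply: ecm; rewrite compA gc.
      by rewrite -gc g'0 comp0l.
    * right; split => //; case: n IH l0 mz' n0 lY' => // n IH l0 mz' _ lY'.
      exists Y', y; split => //.
      exists Q, (c \oc m); split; [exact: epi_ker_coker | by left].
- have c0 : c = 0 by apply: zero_to.
  have em0 : epi m0.
    move=> T g gm; have [g' gc] := coker_fact cc gm.
    by rewrite -gc c0 comp0r.
  have [m0i [e1 e2]] := mono_epi_iso HA mm0 em0.
  have mz : mono (m0i \oc m).
    apply: mono_comp => //; apply: iso_mono; by exists m0.
  case: (IH _ l0 _ _ mz) => [iz|[_ lY]].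
  + left; have -> : m = m0 \oc (m0i \oc m) by rewrite compA e2 comp1m.
    apply: iso_comp => //; by exists m0i.
  + by right; split => //; apply: mylen_pred.
Qed.

Lemma mono_endo_iso X (g : Hom X X) : (exists n, mylen X n) -> mono g -> iso g.
Proof.
case=> n; elim: n {-2}n (leqnn n) => [|k IH] n.
  rewrite leqn0 => /eqP -> l mg; case: (claim l mg) => // [[]] //.
move=> le l mg; case: (claim l mg) => // [[n0 l']].
by apply: (IH n.-1) => //; case: n le n0 {l l'} => //.
Qed.

Lemma fl_mylen X : has_finite_length X -> exists n, mylen X n.
Proof.
case=> n [obj [m [e [ie z0 st]]]]; exists n.
have key : forall i, (i <= n)%N -> mylen (obj i) i.
  elim=> [|i IHi] le //=.
  have [mi [Q [c [cc sQ]]]] := st i le.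
  exists (obj i), (m i); split => //; first by apply: IHi; apply: ltnW.
  by exists Q, c; split => //; left.
have [ei [ei1 ei2]] := ie.
apply: (mylen_iso (m:=ei)); last exact: key.
by exists e.
Qed.

End Len.

Section Fit.
Variable C : precat.
Hypothesis HA : abelian C.
Hypothesis HFL : finite_length C.
Implicit Types X Y Z W : C.

Fixpoint epow X (e : Hom X X) (k : nat) : Hom X X :=
  match k with 0%N => idm X | k'.+1 => e \oc epow e k' end.

Lemma epow_add X (e : Hom X X) a b : epow e (a + b) = epow e a \oc epow e b.
Proof. by elim: a => [|a IH] /=; rewrite ?comp1m // IH compA. Qed.

Lemma epow1 X (e : Hom X X) : epow e 1 = e.
Proof. by rewrite /= compm1. Qed.

Definition kstab X (e : Hom X X) N :=
  forall W (x : Hom W X), epow e N.+1 \oc x = 0 -> epow e N \oc x = 0.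

Lemma ker_stab X (e : Hom X X) : exists N, kstab e N.
Proof.
apply: NNPP => nP.
have nP' : forall N, ~ kstab e N by move=> N h; apply: nP; exists N.
have T : forall M j K (k : Hom K X), is_kernel (epow e M) k -> mylen K j ->
    (M <= j)%N.
  elim=> [//|M IH] j K k kk l.
  have [K' [k' kk']] := kerE HA (epow e M).
  have [a ae] : exists a, k \oc a = k'.
    by apply: (ker_fact kk); rewrite /= -compA (proj1 kk') comp0r.
  have ma : mono a by apply: (mono_compr (g:=k)); rewrite ae; exact: ker_mono kk'.
  case: (claim HA l ma) => [ia|[j0 l']].
    exfalso; apply: (nP' M) => W x ex.
    have [h he] := ker_fact kk ex.
    have [ai [ai1 ai2]] := ia.
    by rewrite -he -(compm1 k) -ai2 (compA k a) ae !compA (proj1 kk') !comp0l.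
  have := IH _ _ _ kk' l'; lia.
have [n ln] := fl_mylen (HFL X).
have [K [k kk]] := kerE HA (epow e n.+1).
case: (claim HA ln (ker_mono kk)) => [ik|[n0 l']].
  have := T _ _ _ _ kk (mylen_iso ik ln); by rewrite ltnn.
have := T _ _ _ _ kk l'; lia.
Qed.

Lemma stab_up X (e : Hom X X) N : kstab e N ->
  forall j W (x : Hom W X), epow e (N + j) \oc x = 0 -> epow e N \oc x = 0.
Proof.
move=> s; elim=> [|j IH] W x; first by rewrite addn0.
have eS : forall k, epow e k \oc e = epow e k.+1.
  by move=> k; rewrite -addn1 epow_add epow1.
rewrite addnS -eS -compA => /IH.
by rewrite compA eS; apply: s.
Qed.

Lemma idem_triv X (p : Hom X X) : indecomposable X -> p \oc p = p ->
  p = 0 \/ p = idm X.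
Proof.
move=> [_ ind] pp.
have [K1 [k1 kk1]] := kerE HA (idm X - p).
have [K2 [k2 kk2]] := kerE HA p.
have [p1 e1] : exists p1, k1 \oc p1 = p.
  by apply: (ker_fact kk1); rewrite compBl comp1m pp subrr.
have [p2 e2] : exists p2, k2 \oc p2 = idm X - p.
  by apply: (ker_fact kk2); rewrite compBr compm1 pp subrr.
have pk1 : p \oc k1 = k1.
  have := proj1 kk1; rewrite compBl comp1m => /eqP; rewrite subr_eq0 => /eqP e.
  by rewrite -e.
have pk2 : p \oc k2 = 0 := proj1 kk2.
have mk1 := ker_mono kk1; have mk2 := ker_mono kk2.
have bp : is_biproduct k1 k2 p1 p2.
  split.
  - by apply: (mono_inj mk1); rewrite compA e1 pk1 compm1.
  - by apply: (mono_inj mk2); rewrite compA e2 compBl pk2 subr0 comp1m compm1.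
  - by apply: (mono_inj mk1); rewrite compA e1 pk2 comp0r.
  - by apply: (mono_inj mk2); rewrite compA e2 compBl pk1 comp1m subrr comp0r.
  - by rewrite e1 e2 addrC subrK.
case: (ind _ _ _ _ _ _ bp) => z.
  by left; rewrite -e1 (zero_to p1 z) comp0r.
by right; apply/eqP; rewrite eq_sym -subr_eq0 -e2 (zero_to p2 z) comp0r.
Qed.

Lemma fitting X (e : Hom X X) : indecomposable X -> iso e \/ exists N, epow e N = 0.
Proof.
move=> ind.
have [N sN] := ker_stab e.
set f := epow e N.+1.
have ff : forall W (x : Hom W X), f \oc (f \oc x) = 0 -> f \oc x = 0.
  move=> W x; rewrite compA /f -epow_add (_ : (N.+1 + N.+1 = N + N.+2)%N); last by lia.
  move=> /(stab_up sN).
  by rewrite /= -compA => ->; rewrite comp0r.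
have [I [i [q [mi eq fe]]]] := image_fact HA f.
have mg : mono (q \oc i).
  move=> W x gx.
  have [P [pa [pb [pe pu pep]]]] := pullbackE HA q x.
  have epb := pep eq.
  apply: epb; apply: (mono_inj mi); rewrite comp0r.
  have : f \oc pa = 0.
    apply: ff; rewrite fe -!compA pe (compA i x pb) (compA q (i \oc x) pb) (compA q i x) gx.
    by rewrite comp0l !comp0r.
  by rewrite fe -compA pe.
have [t [tg gt]] := mono_endo_iso HA (fl_mylen (HFL I)) mg.
set p := i \oc t \oc q.
have pp : p \oc p = p.
  by rewrite /p -!compA (compA q i) (compA (q \oc i) t) gt comp1m.
case: (idem_triv ind pp) => p0.
  right; exists N.+1; rewrite -/f fe.
  have tq : t \oc q = 0 by apply: (mono_inj mi); rewrite compA -/p p0 comp0r.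
  have t0 : t = 0 by apply: eq.
  have zI : is_zero I by rewrite /is_zero -gt t0 comp0r.
  by rewrite (zero_to q zI) comp0r.
left; apply: (mono_endo_iso HA); first exact: fl_mylen (HFL X).
have mf : mono f.
  move=> W x fx; rewrite -(comp1m x) -p0 /p -compA.
  have : i \oc (q \oc x) = 0 by rewrite compA -fe.
  by move/mi ->; rewrite comp0r.
by apply: (mono_compr (g:=epow e N)); rewrite -[e in _ \oc e]epow1 -epow_add addn1.
Qed.

End Fit.

Section Tri.
Variable C : precat.
Implicit Types X Y Z : cx C.

Definition tsub X Y (u v : tri X Y) : tri X Y :=
  Tri (ma u - ma v) (mb u - mb v) (mc u - mc v).

Lemma tcomp1 X Y (u : tri X Y) : tcomp u (tid X) = u.
Proof. by case: u => a b c; rewrite /tcomp /tid /= !compm1. Qed.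
Lemma tcomp1l X Y (u : tri X Y) : tcomp (tid Y) u = u.
Proof. by case: u => a b c; rewrite /tcomp /tid /= !comp1m. Qed.

Lemma cmap_tid X : is_cmap (tid X).
Proof. by rewrite /is_cmap /tid /= !comp1m !compm1. Qed.
Lemma cmap_tcomp X Y Z (v : tri Y Z) (u : tri X Y) :
  is_cmap u -> is_cmap v -> is_cmap (tcomp v u).
Proof.
case=> u1 u2 [v1 v2]; rewrite /is_cmap /tcomp /=; split.
  by rewrite compA v1 -compA u1 compA.
by rewrite compA v2 -compA u2 compA.
Qed.
Lemma cmap_tsub X Y (u v : tri X Y) :
  is_cmap u -> is_cmap v -> is_cmap (tsub u v).
Proof.
case=> u1 u2 [v1 v2]; rewrite /is_cmap /tsub /=.
by rewrite !compBl !compBr u1 u2 v1 v2.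
Qed.
Lemma htp_tsub X Y (u v : tri X Y) : htp (tsub u v) (tzero X Y) -> htp u v.
Proof.
case=> h1 [h0 [e1 e2 e3]]; exists h1, h0; move: e1 e2 e3.
by rewrite /tsub /tzero /= !subr0.
Qed.
Lemma htp_refl X Y (u v : tri X Y) :
  ma u = ma v -> mb u = mb v -> mc u = mc v -> htp u v.
Proof.
move=> e1 e2 e3; exists 0; exists 0; rewrite e1 e2 e3 !subrr.
by split; rewrite ?comp0l ?comp0r ?addr0.
Qed.

Lemma htp0 X Y (u : tri X Y) : cd X \oc cf X = 0 -> inA Y -> is_cmap u ->
  forall g, mc u = cd Y \oc g -> htp u (tzero X Y).
Proof.
move=> dfX [dfY mfY exY] [u1 u2] g ug.
have [h he] : exists h, cf Y \oc h = mb u - g \oc cd X.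
  by apply: exY; rewrite compBr u2 ug compA subrr.
exists h, g; rewrite /tzero /= !subr0; split => //.
  apply: (mono_inj mfY); rewrite u1 compA he compBl -compA dfX comp0r subr0 //.
by rewrite he subrK.
Qed.

Lemma inA_PC (Y : C) : inA (PC Y).
Proof.
rewrite /inA /PC /=; split; first by rewrite comp0r.
  by move=> Z g _; apply: zero_to; exact: zobj_zero.
move=> Z g _; exists 0; rewrite comp0r; symmetry; apply: zero_to; exact: zobj_zero.
Qed.

Lemma zeroA_split X : zeroA X -> split_epi (cd X).
Proof.
case=> h1 [h0 [_ _ e3]]; exists h0; by rewrite -e3 /tid /tzero /= subr0.
Qed.
Lemma split_zeroA X : inA X -> split_epi (cd X) -> zeroA X.
Proof.
move=> hX [s ds]; have [dX _ _] := hX.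
by apply: (htp0 dX hX (cmap_tid X) (g:=s)); rewrite ds.
Qed.

End Tri.

Section Main.
Variable C : precat.
Hypothesis HA : abelian C.

Lemma gen_sub (Y : cx C) (hY : inA Y) (sY : simpleA Y) (Z : C)
    (phi : Hom Z (c0 Y)) :
  (exists g, cd Y \oc g = phi) \/
  (exists a h, phi \oc a - idm (c0 Y) = cd Y \oc h).
Proof.
have [dY mY exY] := hY.
have [P [pa [pb [pe pu _]]]] := pullbackE HA (cd Y) phi.
have [K [k kk]] := kerE HA pb.
have [ua uae] : exists ua, cf Y \oc ua = pa \oc k.
  by apply: exY; rewrite compA pe -compA (proj1 kk) comp0r.
pose Y' := @Cx C K P Z k pb.
have hY' : inA Y'.
  split; [exact: (proj1 kk) | exact: ker_mono kk |].
  move=> W g pg; exact: ker_fact kk pg.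
pose u := @Tri C Y' Y ua pa phi.
have cu : is_cmap u by split.
have mu : monoA u.
  move=> Z' hZ' v cv [h1 [h0 [_ _ e3]]].
  move: e3; rewrite /tcomp /tzero /= subr0 => e3.
  have [s [s1 s2]] := pu _ h0 (mc v) (esym e3).
  have [dZ' _ _] := hZ'.
  by apply: (htp0 dZ' hY' cv (g:=s)); rewrite /= s2.
case: (proj2 sY Y' hY' u cu mu) => [[h1 [h0 [_ _ e3]]]|[w [cw [_ [h1 [h0 [_ _ e3]]]]]]].
  left; exists (pa \oc h0); move: e3; rewrite /tid /tzero /= subr0 => e3.
  by rewrite compA pe -compA -e3 compm1.
by right; exists (mc w), h0; move: e3; rewrite /tid /tcomp /=.
Qed.

Lemma bwd (X : cx C) (hX : inA X) : almost_split_right (cd X) -> simpleA X.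
Proof.
move=> [nsd ash]; have [dX mX exX] := hX; split.
  by move=> z; apply: nsd; apply: zeroA_split.
move=> Y hY u cu mu.
have [dY _ exY] := hY.
case: (classic (split_epi (mc u))) => [[s us]|nsu].
- right.
  pose v0 := @Tri C (PC (c1 X)) Y 0 0 (s \oc cd X).
  have cv0 : is_cmap v0 by rewrite /is_cmap /v0 /PC /= !comp0r ?comp0l.
  have hv0 : htp (tcomp u v0) (tzero _ _).
    exists 0; exists (idm (c1 X)); rewrite /tcomp /v0 /tzero /PC /=.
    by rewrite !comp0r ?comp0l !subr0 ?addr0 compA us comp1m compm1.
  have [h1 [h0 [_ _ e3]]] := mu _ (inA_PC (c1 X)) v0 cv0 hv0.
  move: e3; rewrite /v0 /tzero /= subr0 => e3.
  have [wa wae] : exists wa, cf Y \oc wa = h0 \oc cf X.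
    by apply: exY; rewrite compA -e3 -compA dX comp0r.
  pose w := @Tri C X Y wa h0 s.
  have cw : is_cmap w by split.
  exists w; split => //; split.
  + apply: htp_tsub.
    pose v := tsub (tcomp w u) (tid Y).
    have cv : is_cmap v by apply: cmap_tsub; [apply: cmap_tcomp|apply: cmap_tid].
    apply: (mu _ hY v cv).
    apply: (htp0 dY hX (cmap_tcomp cv cu) (g:=0)).
    by rewrite /v /tcomp /tid /= compBr compm1 compA us comp1m subrr comp0r.
  + apply: htp_tsub.
    apply: (htp0 dX hX (cmap_tsub (cmap_tcomp cw cu) (cmap_tid X)) (g:=0)).
    by rewrite /tcomp /tid /= us subrr comp0r.
- left.
  have [g ug] := ash _ _ nsu.
  have hu : htp u (tzero _ _) by apply: (htp0 dY hX cu (g:=g)); rewrite ug.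
  have := mu _ hY (tid Y) (cmap_tid Y); rewrite tcomp1; exact.
Qed.

End Main.

Section Final.
Variable C : precat.
Hypothesis HA : abelian C.
Hypothesis HFL : finite_length C.

Fixpoint geo (X : C) (e : Hom X X) (k : nat) : Hom X X :=
  match k with 0%N => 0 | k'.+1 => geo e k' + epow e k' end.

Lemma geoP (X : C) (e : Hom X X) k :
  (idm X - e) \oc geo e k = idm X - epow e k.
Proof.
elim: k => [|k IH] /=; first by rewrite comp0r subrr.
rewrite compDr IH compBl comp1m.
by rewrite addrA subrK.
Qed.

Lemma fwd (X : cx C) (hX : inA X) (ind : indecomposable (c0 X)) :
  simpleA X -> almost_split_right (cd X).
Proof.
move=> sX.
have nsd : ~ split_epi (cd X).
  by move=> sp; apply: (proj1 sX); apply: split_zeroA.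
split => // Z phi nsp.
case: (gen_sub HA hX sX phi) => // [[a [h e]]].
exfalso.
case: (fitting HA HFL (phi \oc a) ind) => [[ei [_ e2]]|[N eN]].
  by apply: nsp; exists (a \oc ei); rewrite compA.
apply: nsd; exists ((- h) \oc geo (phi \oc a) N).
have e' : idm (c0 X) - phi \oc a = cd X \oc (- h).
  by rewrite compNr -e opprB.
by rewrite compA -e' geoP eN subr0.
Qed.

End Final.

Section Part2.
Variable C : precat.
Hypothesis HA : abelian C.

Lemma qc_nonfactor (c : C) (Y : cx C) (hY : inA Y) (sY : simpleA Y)
   (q : tri (PC c) Y) (cq : is_cmap q) (eq : epiA q) g :
   mc q = cd Y \oc g -> False.
Proof.
move=> e.
have hq : htp q (tzero _ _).
  apply: (htp0 _ hY cq e); by rewrite /PC /= comp0r.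
apply: (proj1 sY); apply: (eq _ hY (tid Y) (cmap_tid Y)).
by rewrite tcomp1l.
Qed.

Lemma part2 (X : cx C) (hX : inA X) : almost_split_right (cd X) ->
     exists p : tri (PC (c0 X)) X,
       [/\ is_cmap p, epiA p &
           forall Y : cx C, inA Y -> simpleA Y ->
             forall q : tri (PC (c0 X)) Y, is_cmap q -> epiA q ->
               exists theta : tri X Y,
                 [/\ is_cmap theta, isoA theta & htp (tcomp theta p) q]].
Proof.
move=> [nsd ash]; have [dX mX exX] := hX.
pose p := @Tri C (PC (c0 X)) X 0 0 (idm (c0 X)).
have cp : is_cmap p by rewrite /is_cmap /p /PC /= !comp0r.
exists p; split => //.
  move=> Z hZ v cv [h1 [h0 [_ _ e3]]].
  move: e3; rewrite /tcomp /tzero /p /= compm1 subr0 => e3.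
  exact: (htp0 dX hZ cv e3).
move=> Y hY sY q cq eq.
have [dY mY exY] := hY.
case: (gen_sub HA hY sY (mc q \oc cd X)) => [[g ge]|[a [h e]]]; last first.
  exfalso.
  pose t := idm (c0 X) - cd X \oc (a \oc mc q).
  case: (classic (split_epi t)) => [[s ts]|nst].
    apply: (qc_nonfactor hY sY cq eq (g := (- (h \oc mc q)) \oc s)).
    have e2 : mc q \oc t = cd Y \oc (- (h \oc mc q)).
      have e' := congr1 (fun z => z \oc mc q) e.
      move: e'; rewrite /= compBl comp1m ?compA => e'.
      by rewrite /t compBr compm1 compNr !compA -e' opprB.
    by rewrite -{1}(compm1 (mc q)) -ts compA e2 compA.
  have [b be] := ash _ _ nst.
  apply: nsd; exists (a \oc mc q + b).
  by rewrite compDr be /t addrC subrK.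
have [ta tae] : exists ta, cf Y \oc ta = g \oc cf X.
  by apply: exY; rewrite compA ge -compA dX comp0r.
pose th := @Tri C X Y ta g (mc q).
have cth : is_cmap th by split.
have mth : monoA th.
  move=> Z hZ v cv [h1 [h0 [_ _ e3]]].
  move: e3; rewrite /tcomp /tzero /th /= subr0 => e3.
  have [dZ _ _] := hZ.
  case: (classic (split_epi (mc v))) => [[s vs]|nsv].
    exfalso; apply: (qc_nonfactor hY sY cq eq (g := h0 \oc s)).
    by rewrite -{1}(compm1 (mc q)) -vs compA e3 compA.
  have [g' ge'] := ash _ _ nsv.
  by apply: (htp0 dZ hX cv (g:=g')); rewrite ge'.
exists th; split => //.
  case: (proj2 sY X hX th cth mth) => // zX.
  by exfalso; apply: nsd; apply: zeroA_split.
apply: htp_refl; rewrite /tcomp /th /p /= ?comp0r ?compm1 //.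
  by symmetry; apply: zero_from; exact: zobj_zero.
by symmetry; apply: zero_from; exact: zobj_zero.
Qed.

End Part2.

Theorem proposition4p1 (C : precat) (HA : abelian C) (HFL : finite_length C)
    (X : cx C) (HX : inA X) (Hind : indecomposable (c0 X)) :
  (simpleA X <-> almost_split_right (cd X)) /\
  (almost_split_right (cd X) ->
     exists p : tri (PC (c0 X)) X,
       [/\ is_cmap p, epiA p &
           forall Y : cx C, inA Y -> simpleA Y ->
             forall q : tri (PC (c0 X)) Y, is_cmap q -> epiA q ->
               exists theta : tri X Y,
                 [/\ is_cmap theta, isoA theta & htp (tcomp theta p) q]]).
Proof.
split; first split.
- exact: fwd.
- exact: bwd.
- exact: part2.
Qed.
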